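(* Let $T$ be a tree on $n\ge 3$ vertices and let $\mathcal{P}$ be a separating path system of $T$. Then: (i) with the exception of at most one leaf, every leaf of $T$ is an endpoint of a path in $\mathcal{P}$; (ii) if a path in $\mathcal{P}$ has two leaves $u,v$ of $T$ as its endpoints, then there is at least one path in $\mathcal{P}$ which has exactly one of $u,v$ as an endpoint; (iii) every vertex of degree two in $T$ is an endpoint of a path in $\mathcal{P}$.
   Context: For a graph $G$, a family $\mathcal{P}$ of subsets of $E(G)$ is a separating path system of $G$ if every member of $\mathcal{P}$ is (the edge set of) a path in $G$, and for every pair of distinct edges $e,e'\in E(G)$ there is some $P\in\mathcal{P}$ containing exactly one of $e,e'$. *)

(* Defs.v *)
From mathcomp Require Import all_boot all_order.
Set Implicit Arguments. Unset Strict Implicit. Unset Printing Implicit Defensive.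

Definition simple_graph (V : finType) (adj : rel V) : Prop :=
  symmetric adj /\ irreflexive adj.

Definition edge_set (V : finType) (adj : rel V) : {set {set V}} :=
  [set E : {set V} | [exists x : V, exists y : V, adj x y && (E == [set x; y])]].

Definition connected_graph (V : finType) (adj : rel V) : Prop :=
  forall x y : V, connect adj x y.

Definition acyclic_graph (V : finType) (adj : rel V) : Prop :=
  forall c : seq V, 3 <= size c -> ~ ucycle adj c.

Definition is_tree (V : finType) (adj : rel V) : Prop :=
  simple_graph adj /\ connected_graph adj /\ acyclic_graph adj.

Definition deg (V : finType) (adj : rel V) (v : V) : nat := #|[set y | adj v y]|.

Definition is_leaf (V : finType) (adj : rel V) (v : V) : bool := deg adj v == 1.

Definition walk_edges (V : finType) (x : V) (p : seq V) : {set {set V}} :=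
  [set [set uv.1; uv.2] | uv in zip (x :: p) p].

Definition is_path_edges (V : finType) (adj : rel V) (F : {set {set V}}) : Prop :=
  exists (x : V) (p : seq V), [/\ path adj x p, uniq (x :: p) & F = walk_edges x p].

Definition separating_path_system (V : finType) (adj : rel V)
    (P : {set {set {set V}}}) : Prop :=
  (forall F, F \in P -> is_path_edges adj F) /\
  (forall e1 e2, e1 \in edge_set adj -> e2 \in edge_set adj -> e1 != e2 ->
     exists2 F, F \in P & (e1 \in F) != (e2 \in F)).

Definition is_endpoint (V : finType) (v : V) (F : {set {set V}}) : bool :=
  #|[set E in F | v \in E]| == 1.

Definition covered (V : finType) (P : {set {set {set V}}}) (v : V) : Prop :=
  exists2 F, F \in P & is_endpoint v F.

(* Main.v *)
Require Import Defs.
From mathcomp Require Import all_boot all_order.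
Set Implicit Arguments. Unset Strict Implicit. Unset Printing Implicit Defensive.

Definition good_edges (V : finType) (adj : rel V) (F : {set {set V}}) :=
  forall E, E \in F -> exists x y, adj x y /\ E = [set x; y].

Lemma path_zip_adj (V : finType) (adj : rel V) (x : V) p uv :
  path adj x p -> uv \in zip (x :: p) p -> adj uv.1 uv.2.
Proof.
elim: p x => [|y p IH] x //= /andP[hxy hp]; rewrite in_cons => /orP[/eqP->//|].
exact: IH.
Qed.

Lemma path_good (V : finType) (adj : rel V) F :
  is_path_edges adj F -> good_edges adj F.
Proof.
move=> [x [p [hp _ ->]]] E /imsetP[uv huv ->]; exists uv.1, uv.2; split => //.
exact: path_zip_adj hp huv.
Qed.

Lemma endpoint_of (V : finType) (adj : rel V) F v a :
  symmetric adj -> good_edges adj F -> [set v; a] \in F ->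
  (forall y, adj v y -> y != a -> [set v; y] \notin F) -> is_endpoint v F.
Proof.
move=> sym hg hin hno; apply/cards1P; exists [set v; a].
apply/setP => E; rewrite !inE; apply/andP/eqP.
  move=> [hE hv]; have [x [y [hxy eE]]] := hg E hE; subst E.
  have [z [hz eE]] : exists z, adj v z /\ [set x; y] = [set v; z].
    move: hv; rewrite !inE => /orP[/eqP ex|/eqP ex]; subst v; first by exists y; split.
    by exists x; split; [rewrite sym | apply/setP=> z; rewrite !inE orbC].
  rewrite eE in hE *; case: (eqVneq z a) => [->//|hza].
  by move: (hno z hz hza); rewrite hE.
by move=> ->; rewrite hin !inE eqxx.
Qed.

Lemma endpoint_leaf (V : finType) (adj : rel V) F u a :
  symmetric adj -> good_edges adj F -> [set y | adj u y] = [set a] ->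
  is_endpoint u F = ([set u; a] \in F).
Proof.
move=> sym hg hN; have hua : adj u a by have := in_set1 a a; rewrite -hN inE eqxx.
apply/idP/idP.
  rewrite /is_endpoint => /cards1P[E hE].
  have : E \in [set E in F | u \in E] by rewrite hE inE.
  rewrite inE => /andP[hEF hu]; have [x [y [hxy eE]]] := hg E hEF; subst E.
  have nb : forall z, adj u z -> z = a.
    by move=> z hz; apply/set1P; rewrite -hN inE.
  move: hu; rewrite !inE => /orP[/eqP eu|/eqP eu].
    by subst x; rewrite -(nb y hxy).
  subst y.
  rewrite -(nb x); last by rewrite sym.
  by have -> : [set u; x] = [set x; u] by apply/setP=> z; rewrite !inE orbC.
move=> hin; apply: endpoint_of hin _ => // y hy hya.
have : y \in [set a] by rewrite -hN inE.
by rewrite inE (negbTE hya).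
Qed.

Lemma edge_in (V : finType) (adj : rel V) x y : adj x y -> [set x; y] \in edge_set adj.
Proof. by move=> h; rewrite inE; apply/existsP; exists x; apply/existsP; exists y; rewrite h eqxx. Qed.

Lemma leaf_nb (V : finType) (adj : rel V) u : is_leaf adj u ->
  exists a, [set y | adj u y] = [set a].
Proof. by move/cards1P. Qed.

Theorem lemma6p1 (V : finType) (adj : rel V) (P : {set {set {set V}}}) :
  is_tree adj -> 3 <= #|V| -> separating_path_system adj P ->
  (* (i) at most one leaf is not an endpoint of a path in P *)
  (forall u v : V, is_leaf adj u -> is_leaf adj v -> u != v ->
     covered P u \/ covered P v) /\
  (* (ii) *)
  (forall F u v, F \in P -> is_leaf adj u -> is_leaf adj v -> u != v ->
     is_endpoint u F -> is_endpoint v F ->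
     exists2 F', F' \in P & is_endpoint u F' != is_endpoint v F') /\
  (* (iii) *)
  (forall v : V, deg adj v = 2 -> covered P v).
Proof.
move=> [[sym irr] [conn _]] h3 [hpath hsep].
have hg : forall F, F \in P -> good_edges adj F by move=> F /hpath; apply: path_good.
have adjN : forall x y, [set y | adj x y] = [set y] -> adj x y.
  by move=> x y h; have := in_set1 y y; rewrite -h inE eqxx.
have leafdist : forall u v a b, [set y | adj u y] = [set a] ->
    [set y | adj v y] = [set b] -> u != v -> [set u; a] != [set v; b].
  move=> u v a b hu hv huv; apply/eqP => e.
  have ua : u = b.
    have : u \in [set v; b] by rewrite -e !inE eqxx.
    by rewrite !inE (negbTE huv) => /eqP.
  have va : v = a.
    have : v \in [set u; a] by rewrite e !inE eqxx.
    by rewrite !inE eq_sym (negbTE huv) => /eqP.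
  subst b a.
  have [w hw] : exists w, w \notin [set u; v].
    case: (pickP (mem (~: [set u; v]))) => [w hw|h0].
      by exists w; move: hw; rewrite /= inE.
    exfalso.
    have : #|V| <= #|[set u; v]|.
      rewrite -cardsT subset_leq_card //; apply/subsetP => x _.
      by have := h0 x; rewrite /= inE => /negbFE.
    by rewrite cards2 huv /= => /(leq_trans h3).
  have cl : closed adj (mem [set u; v]).
    move=> x y hxy.
    have nbu : forall z, adj u z -> z = v by move=> z hz; apply/set1P; rewrite -hu inE.
    have nbv : forall z, adj v z -> z = u by move=> z hz; apply/set1P; rewrite -hv inE.
    rewrite !inE; case/orP: (orbN ((x == u) || (x == v))) => hx.
      case/orP: hx => /eqP ex; subst x.
        by rewrite (nbu _ hxy) !eqxx !orbT.
      by rewrite (nbv _ hxy) !eqxx !orbT.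
    move: hx; rewrite negb_or => /andP[hxu hxv]; rewrite (negbTE hxu) (negbTE hxv).
    apply/esym/negP => /orP[/eqP ey|/eqP ey]; subst y.
      by move: (nbu x); rewrite sym => /(_ hxy) ex; rewrite ex eqxx in hxv.
    by move: (nbv x); rewrite sym => /(_ hxy) ex; rewrite ex eqxx in hxu.
  have := closed_connect cl (conn u w).
  by rewrite !inE eqxx /= => /esym; move: hw; rewrite !inE => /negbTE->.
split; [|split].
- move=> u v lu lv huv; have [a ha] := leaf_nb lu; have [b hb] := leaf_nb lv.
  have [F hF hne] := hsep _ _ (edge_in (adjN _ _ ha)) (edge_in (adjN _ _ hb))
                              (leafdist _ _ _ _ ha hb huv).
  case hFa: ([set u; a] \in F) hne => /= hne.
    by left; exists F => //; rewrite (endpoint_leaf sym (hg F hF) ha).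
  by right; exists F => //; rewrite (endpoint_leaf sym (hg F hF) hb); move: hne; case: (_ \in F).
- move=> F u v _ lu lv huv _ _; have [a ha] := leaf_nb lu; have [b hb] := leaf_nb lv.
  have [F' hF hne] := hsep _ _ (edge_in (adjN _ _ ha)) (edge_in (adjN _ _ hb))
                              (leafdist _ _ _ _ ha hb huv).
  by exists F' => //; rewrite (endpoint_leaf sym (hg F' hF) ha) (endpoint_leaf sym (hg F' hF) hb).
- move=> v /eqP/cards2P[a [b [hab hN]]].
  have : a \in [set y | adj v y] by rewrite hN !inE eqxx.
  rewrite inE => hva.
  have : b \in [set y | adj v y] by rewrite hN !inE eqxx orbT.
  rewrite inE => hvb.
  have hne : [set v; a] != [set v; b].
    apply/eqP => e; have : a \in [set v; b] by rewrite -e !inE eqxx orbT.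
    rewrite !inE (negbTE hab) orbF => /eqP ea; subst a; by rewrite irr in hva.
  have nb : forall y, adj v y -> (y == a) || (y == b).
    move=> y hy; have : y \in [set y | adj v y] by rewrite inE.
    by rewrite hN !inE.
  have [F hF hsF] := hsep _ _ (edge_in hva) (edge_in hvb) hne.
  exists F => //.
  case hFa: ([set v; a] \in F) hsF => /= hsF.
    apply: (endpoint_of sym (hg F hF) hFa) => y hy hya.
    have := nb y hy; rewrite (negbTE hya) /= => /eqP->; by move: hsF; case: (_ \in F).
  apply: (@endpoint_of _ adj F v b sym (hg F hF)); first by move: hsF; case: (_ \in F).
  move=> y hy hyb; have := nb y hy; rewrite (negbTE hyb) orbF => /eqP->; by rewrite hFa.
Qed.
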